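(* Let $n\ge 3$ and $3\le i\le n$. Then the subgroup $H_{\Delta_i}=\langle P_n(D),\Delta_i\rangle$ of $B_n(D)$ is not bi-orderable, where $\Delta_i=\sigma_1(\sigma_2\sigma_1)\cdots(\sigma_{i-1}\cdots\sigma_2\sigma_1)$.
   Context: $B_n(D)$ is the Artin braid group on $n$ strands, with generators $\sigma_1,\dots,\sigma_{n-1}$ and relations $\sigma_i\sigma_j=\sigma_j\sigma_i$ for $|i-j|\ge 2$ and $\sigma_i\sigma_{i+1}\sigma_i=\sigma_{i+1}\sigma_i\sigma_{i+1}$. The permutation homomorphism $\pi: B_n(D)\to S_n$ is given by $\pi(\sigma_i)=(i,i+1)$, and $P_n(D)=\ker\pi$. $\langle P_n(D),\beta\rangle$ is the subgroup generated by $P_n(D)$ and $\beta$. A group is bi-orderable if it admits a strict total ordering invariant under both left and right multiplication. *)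

(* Defs.v *)
(* Artin braid group B_n given by its presentation:
   elements = words in the generators sigma_k^{+-1} (1 <= k <= n-1) modulo the
   congruence generated by free cancellation and the braid relations. *)
From mathcomp Require Import all_boot.
Set Implicit Arguments. Unset Strict Implicit. Unset Printing Implicit Defensive.

(* a letter (k, true) is sigma_k, (k, false) is sigma_k^{-1} *)
Definition letter := (nat * bool)%type.
Definition word := seq letter.

Definition valid_gen (n k : nat) : bool := (1 <= k) && (k < n).
Definition valid_word (n : nat) (w : word) : bool := all (fun l => valid_gen n l.1) w.

Definition inv_word (w : word) : word := rev [seq (l.1, ~~ l.2) | l <- w].

(* defining relations of B_n (as a monoid presentation of the group) *)
Inductive braid_rel (n : nat) : word -> word -> Prop :=
| br_cancel k b : valid_gen n k -> braid_rel n [:: (k, b); (k, ~~ b)] [::]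
| br_comm j k : valid_gen n j -> valid_gen n k -> (j.+2 <= k) || (k.+2 <= j) ->
    braid_rel n [:: (j, true); (k, true)] [:: (k, true); (j, true)]
| br_braid k : valid_gen n k -> valid_gen n k.+1 ->
    braid_rel n [:: (k, true); (k.+1, true); (k, true)]
                [:: (k.+1, true); (k, true); (k.+1, true)].

Inductive braid_eq (n : nat) : word -> word -> Prop :=
| be_refl w : braid_eq n w w
| be_sym u v : braid_eq n u v -> braid_eq n v u
| be_trans u v w : braid_eq n u v -> braid_eq n v w -> braid_eq n u w
| be_step u x y v : braid_rel n x y -> braid_eq n (u ++ x ++ v) (u ++ y ++ v).

Definition swapn (k m : nat) : nat :=
  if m == k then k.+1 else if m == k.+1 then k else m.
Definition perm_of_word (w : word) : nat -> nat :=
  foldr (fun l f => fun m => swapn l.1 (f m)) id w.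

Definition pure_braid (n : nat) (w : word) : Prop :=
  valid_word n w /\ forall m, perm_of_word w m = m.

(* Delta_i = sigma_1 (sigma_2 sigma_1) ... (sigma_{i-1} ... sigma_2 sigma_1) *)
Definition Delta (i : nat) : word :=
  flatten [seq [seq (k, true) | k <- rev (iota 1 j)] | j <- iota 1 i.-1].

(* the subgroup < P_n(D), beta > of B_n(D), as a set of words closed under braid_eq *)
Inductive in_PB (n : nat) (beta : word) : word -> Prop :=
| pb_pure w : pure_braid n w -> in_PB n beta w
| pb_gen : valid_word n beta -> in_PB n beta beta
| pb_mul u v : in_PB n beta u -> in_PB n beta v -> in_PB n beta (u ++ v)
| pb_inv u : in_PB n beta u -> in_PB n beta (inv_word u)
| pb_eq u v : in_PB n beta u -> braid_eq n u v -> in_PB n beta v.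

(* a subgroup H of B_n (given as a braid_eq-closed set of words) is bi-orderable:
   there is a strict total order on H (well defined on B_n-classes) invariant
   under left and right multiplication by elements of H *)
Definition bi_orderable_sub (n : nat) (H : word -> Prop) : Prop :=
  exists lt : word -> word -> Prop,
    (forall u u' v v', H u -> H v -> braid_eq n u u' -> braid_eq n v v' ->
           lt u v -> lt u' v') /\
        (forall u, H u -> ~ lt u u) /\
        (forall u v w, H u -> H v -> H w -> lt u v -> lt v w -> lt u w) /\
        (forall u v, H u -> H v -> ~ braid_eq n u v -> (lt u v \/ lt v u)) /\
        (forall g u v, H g -> H u -> H v -> lt u v -> lt (g ++ u) (g ++ v)) /\
        (forall g u v, H g -> H u -> H v -> lt u v -> lt (u ++ g) (v ++ g)).

(* Main.v *)
From Stdlib Require Import ZArith.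
Require Import Defs.
From mathcomp Require Import all_boot zify.
Set Implicit Arguments. Unset Strict Implicit.

Section B.
Variable n : nat.

Lemma be_ctx a b x y : braid_eq n x y -> braid_eq n (a ++ x ++ b) (a ++ y ++ b).
Proof.
elim=> [w|u v _ IH|u v w _ IH1 _ IH2|u x' y' v H].
- exact: be_refl.
- exact: be_sym.
- exact: be_trans IH2.
- have := be_step (a ++ u) (v ++ b) H. by rewrite -!catA.
Qed.

Lemma be_app u u' v v' : braid_eq n u u' -> braid_eq n v v' -> braid_eq n (u ++ v) (u' ++ v').
Proof.
move=> H1 H2; apply: (be_trans (v := u' ++ v)).
- have := be_ctx [::] v H1. by rewrite /=.
- have := be_ctx u' [::] H2. by rewrite !cats0.
Qed.

Definition sp k : letter := (k, true).
Definition sn k : letter := (k, false).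

Definition bnd lo hi (w : word) := all (fun l : letter => l.2 && (lo <= l.1 <= hi)) w.

Lemma comm_word p lo hi w : valid_gen n p -> 1 <= lo -> hi < n ->
  (hi.+2 <= p) || (p.+2 <= lo) -> bnd lo hi w ->
  braid_eq n (w ++ [:: sp p]) ([:: sp p] ++ w).
Proof.
move=> vp l1 hn hd; elim: w => [|[a b] w IH] /=; first by move=> _; apply: be_refl.
case/andP=> /andP [/= -> hab] /IH {}IH.
apply: (be_trans (v := [:: (a,true)] ++ ([:: sp p] ++ w))).
  exact: (be_app (be_refl n [:: (a,true)]) IH).
have := be_step [::] w (br_comm (j:=a) (k:=p) _ vp _).
rewrite /=; apply; rewrite /valid_gen; lia.
Qed.


Fixpoint dl j : word := if j is j'.+1 then sp j :: dl j' else [::].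
Fixpoint gl j : word := if j is j'.+1 then gl j' ++ [:: sp j] else [::].
Fixpoint D j : word := if j is j'.+1 then D j' ++ dl j else [::].

Lemma bnd_cat lo hi u v : bnd lo hi (u ++ v) = bnd lo hi u && bnd lo hi v.
Proof. exact: all_cat. Qed.

Lemma bnd_dl j hi : j <= hi -> bnd 1 hi (dl j).
Proof. elim: j => //= j IH h; rewrite IH ?andbT //; lia. Qed.
Lemma bnd_gl j hi : j <= hi -> bnd 1 hi (gl j).
Proof. elim: j => //= j IH h; rewrite bnd_cat IH /= ?andbT //; lia. Qed.
Lemma bnd_D j hi : j <= hi -> bnd 1 hi (D j).
Proof. elim: j => //= j IH h; have := bnd_dl (j:=j.+1) (hi:=hi) h; rewrite bnd_cat IH; last lia. by []. Qed.

Lemma comm_word' p lo hi w : valid_gen n p -> 1 <= lo -> hi < n ->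
  (hi.+2 <= p) || (p.+2 <= lo) -> bnd lo hi w ->
  braid_eq n ([:: sp p] ++ w) (w ++ [:: sp p]).
Proof. by move=> vp l1 hn hd hb; apply: be_sym; apply: comm_word vp l1 hn hd hb. Qed.

Lemma F1 j k : 2 <= k <= j -> j < n ->
  braid_eq n (dl j ++ [:: sp k]) ([:: sp k.-1] ++ dl j).
Proof.
elim: j => [|j IH] hk hj; first lia.
have [ek|nk] := eqVneq k j.+1.
- subst k; case: j IH hk hj => [|j] _ hk hj; first lia.
  apply: (be_trans (v := [:: sp j.+2; sp j.+1; sp j.+2] ++ dl j)).
    have := be_app (be_refl n [:: sp j.+2; sp j.+1]) (comm_word (p := j.+2) (lo := 1) (hi := j) (w := dl j) _ _ _ _ _).
    apply; rewrite ?bnd_dl /valid_gen //; lia.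
  have := be_step (n:=n) [::] (dl j) (br_braid (k := j.+1) _ _).
  move=> H; apply: be_sym; apply: H; rewrite /valid_gen; lia.
- apply: (be_trans (v := [:: sp j.+1; sp k.-1] ++ dl j)).
    exact: (be_app (be_refl n [:: sp j.+1]) (IH ltac:(lia) ltac:(lia))).
  have := be_step (n:=n) [::] (dl j) (br_comm (j := j.+1) (k := k.-1) _ _ _).
  apply; rewrite /valid_gen; lia.
Qed.


Lemma F2 j k : 2 <= k <= j -> j < n ->
  braid_eq n ([:: sp k] ++ gl j) (gl j ++ [:: sp k.-1]).
Proof.
elim: j => [|j IH] hk hj; first lia.
have [ek|nk] := eqVneq k j.+1.
- subst k; case: j IH hk hj => [|j] _ hk hj; first lia.
  rewrite /= -!catA /=.
  apply: (be_trans (v := gl j ++ [:: sp j.+2; sp j.+1; sp j.+2])).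
    have := be_app (comm_word' (p := j.+2) (lo := 1) (hi := j) (w := gl j) _ _ _ _ _) (be_refl n [:: sp j.+1; sp j.+2]).
    rewrite -!catA /=; apply; rewrite ?bnd_gl /valid_gen //; lia.
  have := be_step (n:=n) (gl j) [::] (br_braid (k := j.+1) _ _).
  rewrite !cats0 => H; apply: be_sym; apply: H; rewrite /valid_gen; lia.
- rewrite /= -!catA.
  apply: (be_trans (v := gl j ++ [:: sp k.-1; sp j.+1])).
    have := be_app (IH ltac:(lia) ltac:(lia)) (be_refl n [:: sp j.+1]).
    by rewrite -!catA.
  have := be_step (n:=n) (gl j) [::] (br_comm (j := k.-1) (k := j.+1) _ _ _).
  rewrite !cats0; apply; rewrite /valid_gen; lia.
Qed.

Lemma C j : j.+1 < n -> braid_eq n (D j.+1) (gl j.+1 ++ D j).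
Proof.
elim: j => [|j IH] hj; first exact: be_refl.
apply: be_sym.
change (braid_eq n ((gl j.+1 ++ [:: sp j.+2]) ++ (D j ++ dl j.+1)) ((D j ++ dl j.+1) ++ sp j.+2 :: dl j.+1)).
apply: (be_trans (v := (gl j.+1 ++ D j) ++ [:: sp j.+2] ++ dl j.+1)).
  have := be_app (be_app (be_refl n (gl j.+1)) (comm_word' (p := j.+2) (lo := 1) (hi := j) (w := D j) _ _ _ _ _)) (be_refl n (dl j.+1)).
  rewrite -!catA; apply; rewrite ?bnd_D /valid_gen //; lia.
have := be_app (be_sym (IH ltac:(lia))) (be_refl n ([:: sp j.+2] ++ dl j.+1)).
by rewrite /= -!catA.
Qed.

Lemma G j k : j < n -> 1 <= k <= j ->
  braid_eq n (D j ++ [:: sp k]) ([:: sp (j.+1 - k)] ++ D j).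
Proof.
elim: j k => [|j IH] k hj hk; first lia.
have [ek|nk] := eqVneq k 1.
- subst k; case: j IH hj hk => [|j] IH hj hk; first exact: be_refl.
  apply: (be_trans (v := (gl j.+2 ++ D j.+1) ++ [:: sp 1])).
    exact: (be_app (C (j := j.+1) hj) (be_refl n _)).
  apply: (be_trans (v := (gl j.+2 ++ [:: sp j.+1]) ++ D j.+1)).
    have := be_app (be_refl n (gl j.+2)) (IH 1 ltac:(lia) ltac:(lia)).
    by rewrite -!catA.
  apply: (be_trans (v := ([:: sp j.+2] ++ gl j.+2) ++ D j.+1)).
    exact: (be_app (be_sym (F2 (j := j.+2) (k := j.+2) ltac:(lia) hj)) (be_refl n _)).
  rewrite -catA.
  exact: (be_app (be_refl n _) (be_sym (C (j := j.+1) hj))).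
- change (braid_eq n ((D j ++ dl j.+1) ++ [:: sp k]) ([:: sp (j.+2 - k)] ++ D j ++ dl j.+1)).
  apply: (be_trans (v := (D j ++ [:: sp k.-1]) ++ dl j.+1)).
    have := be_app (be_refl n (D j)) (F1 (j := j.+1) (k := k) ltac:(lia) hj).
    by rewrite -!catA.
  have -> : j.+2 - k = j.+1 - k.-1 by lia.
  have := be_app (IH k.-1 ltac:(lia) ltac:(lia)) (be_refl n (dl j.+1)).
  by rewrite -!catA.
Qed.


Lemma dl_eq m : [seq (k, true) | k <- rev (iota 1 m)] = dl m.
Proof.
elim: m => // m IH.
by rewrite -(addn1 m) iotaD rev_cat /= add1n IH addn1.
Qed.

Lemma Delta_D j : Delta j.+1 = D j.
Proof.
rewrite /Delta /=; elim: j => // j IH.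
rewrite (eq_map dl_eq) in IH; rewrite -(addn1 j) iotaD map_cat flatten_cat (eq_map dl_eq) IH (eq_map dl_eq) /= cats0 addn1. by rewrite add0n. Qed.
Lemma inv_cons l w : inv_word (l :: w) = inv_word w ++ [:: (l.1, ~~ l.2)].
Proof. by rewrite /inv_word /= rev_cons cats1. Qed.

Lemma valid_inv w : valid_word n w -> valid_word n (inv_word w).
Proof.
elim: w => // l w IH /= /andP [h1 h2]; rewrite inv_cons /valid_word all_cat.
by have := IH h2; rewrite /valid_word => ->; rewrite /= h1.
Qed.

Lemma mulV w : valid_word n w -> braid_eq n (w ++ inv_word w) [::].
Proof.
elim: w => [|[k b] w IH] /=; first by move=> _; apply: be_refl.
case/andP => hk /IH {}IH; rewrite inv_cons.
apply: (be_trans (v := [:: (k, b)] ++ [::] ++ [:: (k, ~~ b)])).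
  have := be_ctx [:: (k,b)] [:: (k, ~~b)] IH. by rewrite /= -!catA.
have := be_step (n:=n) [::] [::] (br_cancel b hk). by rewrite /=.
Qed.

Lemma inv_invK w : inv_word (inv_word w) = w.
Proof.
rewrite /inv_word map_rev revK -map_comp.
by rewrite -[RHS]map_id; apply: eq_map => -[a b] /=; rewrite negbK.
Qed.

Lemma Vmul w : valid_word n w -> braid_eq n (inv_word w ++ w) [::].
Proof.
move=> h; have := mulV (valid_inv h); by rewrite inv_invK.
Qed.

End B.

Definition state := ((nat -> nat) * (nat -> nat -> Z))%type.
Definition ind (x y a c : nat) : Z :=
  if ((x == a) && (y == c)) || ((x == c) && (y == a)) then 1%Z else 0%Z.
Definition sgnb (b : bool) : Z := if b then 1%Z else (-1)%Z.
Definition step (l : letter) (st : state) : state :=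
  (fun m => st.1 (swapn l.1 m),
   fun x y => (st.2 x y + sgnb l.2 * ind x y (st.1 l.1) (st.1 l.1.+1))%Z).
Definition run (w : word) (st : state) : state := foldl (fun s l => step l s) st w.
Definition sequiv (s t : state) := (forall m, s.1 m = t.1 m) /\ (forall x y, s.2 x y = t.2 x y).

Lemma step_equiv l s t : sequiv s t -> sequiv (step l s) (step l t).
Proof. by case=> h1 h2; split=> [m|x y] /=; rewrite ?h1 ?h2. Qed.

Lemma run_equiv w s t : sequiv s t -> sequiv (run w s) (run w t).
Proof. elim: w s t => //= l w IH s t h; apply: IH; exact: step_equiv. Qed.

Lemma run_cat u v s : run (u ++ v) s = run v (run u s).
Proof. exact: foldl_cat. Qed.

Lemma ind_sym x y a c : ind x y a c = ind x y c a.
Proof. by rewrite /ind orbC. Qed.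

Lemma swapn_far k m : m != k -> m != k.+1 -> swapn k m = m.
Proof. by rewrite /swapn => /negbTE -> /negbTE ->. Qed.

Ltac swt := repeat (match goal with
 | |- context [?a == ?b] => lazymatch a with context [if _ then _ else _] => fail | _ =>
     lazymatch b with context [if _ then _ else _] => fail | _ => case: (eqVneq a b) => ? end end
 end; simpl); try lia.

Lemma rel_equiv n x y : braid_rel n x y -> forall s, sequiv (run x s) (run y s).
Proof.
case=> [k b _|j k _ _ hjk|k _ _] [p L]; split => [m|u v] /=; rewrite /swapn /=.
all: swt.
all: try (rewrite [ind _ _ (p k) _]ind_sym; case: b; rewrite /sgnb /negb; lia).
all: try (congr p; lia).
Qed.

Lemma be_inv n u v : braid_eq n u v -> forall s, sequiv (run u s) (run v s).
Proof.
elim=> {u v} [w|u v _ IH|u v w _ IH1 _ IH2|u x y v H] s.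
- by split.
- by case: (IH s) => h1 h2; split=> *; rewrite ?h1 ?h2.
- by case: (IH1 s) => h1 h2; case: (IH2 s) => h3 h4; split=> *; rewrite ?h1 ?h2 ?h3 ?h4.
- rewrite !run_cat; apply: run_equiv; exact: rel_equiv H _.
Qed.

Lemma swapnK k m : swapn k (swapn k m) = m.
Proof. rewrite /swapn; swt. Qed.

Definition s0 : state := (id, fun _ _ => 0%Z).

Lemma nontriv n j : 2 <= j -> ~ braid_eq n [:: sp 1; sp 1; sn j; sn j] [::].
Proof.
move=> hj H; have := (be_inv H s0).2 1 2.
cbn -[Z.add Z.mul ind swapn]; rewrite !swapnK.
have e1 : swapn j j = j.+1 by rewrite /swapn eqxx.
have e2 : swapn j j.+1 = j by rewrite /swapn ifN ?eqxx //; lia.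
have e3 : ind 1 2 j j.+1 = 0%Z by rewrite /ind; case: j hj {e1 e2 H} => [|[|[|j]]].
have e4 : ind 1 2 j.+1 j = 0%Z by rewrite ind_sym.
rewrite e1 e2 e3 e4 /=; lia.
Qed.


Lemma bnd_valid n hi w : bnd 1 hi w -> hi < n -> valid_word n w.
Proof.
move=> hb hn; apply/allP => l hl; move/allP: hb => /(_ l hl) /andP [_ h].
rewrite /valid_gen; lia.
Qed.

Theorem mainTheorem10 (n i : nat) :
  3 <= n -> 3 <= i <= n -> ~ bi_orderable_sub n (in_PB n (Delta i)).
Proof.
move=> hn /andP [hi1 hi2] [lt [wd [irr [tr [tot [lm rm]]]]]].
have [j ej] : exists j, i = j.+1 by exists i.-1; lia.
subst i; rewrite Delta_D in wd irr tr tot lm rm.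
set H := in_PB n (D j) in wd irr tr tot lm rm.
have hjn : j < n by lia.
have vd : valid_word n (D j) by apply: (bnd_valid (hi := j)); rewrite ?bnd_D.
set x := [:: sp 1; sp 1; sn j; sn j].
have vx : valid_word n x by rewrite /x /valid_word /= /valid_gen; apply/and5P; split => //=; lia.
have Hd : H (D j) by apply: pb_gen.
have Hx : H x.
  apply: pb_pure; split => // m; rewrite /x /= swapnK; exact: swapnK.
have H0 : H [::] by apply: pb_pure; split.
have Hxi : H (inv_word x) by apply: pb_inv.
have Hdi : H (inv_word (D j)) by apply: pb_inv.
have G1 := G (k := 1) hjn ltac:(lia).
have Gj := G (k := j) hjn ltac:(lia).
rewrite subSnn in Gj.
have e1 : j.+1 - 1 = j by lia.
rewrite e1 in G1.
have vsj : valid_word n [:: sp j] by rewrite /valid_word /= /valid_gen; apply/andP; split => //; lia.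
have vs1 : valid_word n [:: sp 1] by rewrite /valid_word /= /valid_gen; apply/andP; split => //; lia.
have Gji : braid_eq n (D j ++ [:: sn j]) ([:: sn 1] ++ D j).
  apply: be_sym.
  apply: (be_trans (v := [:: sn 1] ++ (D j ++ [:: sp j]) ++ [:: sn j])).
    have := be_ctx ([:: sn 1] ++ D j) [::] (be_sym (mulV vsj)).
    by rewrite ?cats0 -?catA.
  apply: (be_trans (v := ([:: sn 1] ++ [:: sp 1]) ++ D j ++ [:: sn j])).
    have := be_ctx [:: sn 1] [:: sn j] Gj.
    by rewrite -?catA.
  have := be_ctx [::] (D j ++ [:: sn j]) (Vmul vs1).
  rewrite /= -?catA /=; move=> hh; exact: hh.
have key : braid_eq n (D j ++ x) (inv_word x ++ D j).
  rewrite /x /inv_word /=.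
  apply: (be_trans (v := [:: sp j] ++ (D j ++ [:: sp 1]) ++ [:: sn j; sn j])).
    have := be_ctx [::] [:: sp 1; sn j; sn j] G1.
    rewrite /= -?catA /=; move=> hh; exact: hh.
  apply: (be_trans (v := [:: sp j; sp j] ++ (D j ++ [:: sn j]) ++ [:: sn j])).
    have := be_ctx [:: sp j] [:: sn j; sn j] G1.
    rewrite /= -?catA /=; move=> hh; exact: hh.
  apply: (be_trans (v := [:: sp j; sp j; sn 1] ++ (D j ++ [:: sn j]))).
    have := be_ctx [:: sp j; sp j] [:: sn j] Gji.
    rewrite /= -?catA /=; move=> hh; exact: hh.
  have := be_ctx [:: sp j; sp j; sn 1] [::] Gji.
  rewrite /= -?catA ?cats0 /=; move=> hh; exact: hh.
have conjx : braid_eq n (D j ++ x ++ inv_word (D j)) (inv_word x).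
  apply: (be_trans (v := inv_word x ++ D j ++ inv_word (D j))).
    have := be_ctx [::] (inv_word (D j)) key. rewrite /= -?catA /=; move=> hh; exact: hh.
  have := be_ctx (inv_word x) [::] (mulV vd). by rewrite cats0.
have conj0 : braid_eq n (D j ++ [::] ++ inv_word (D j)) [::] by exact: mulV.
have cj : forall a b, H a -> H b -> lt a b ->
    lt (D j ++ a ++ inv_word (D j)) (D j ++ b ++ inv_word (D j)).
  move=> a b Ha Hb hab; rewrite !catA; apply: rm => //; try apply: pb_mul => //.
  exact: lm.
have mem : forall a b, H a -> H b -> H (D j ++ a ++ b) by move=> *; do 2 apply: pb_mul => //.
have nt : ~ braid_eq n x [::] by apply: nontriv; lia.
have xxi : braid_eq n (x ++ inv_word x) [::] by exact: mulV.
case: (tot _ _ Hx H0 nt) => h.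
- have h1 := cj _ _ Hx H0 h.
  have h2 : lt (inv_word x) [::] by apply: (wd _ _ _ _ _ _ conjx conj0 h1); apply: mem.
  have h3 := lm _ _ _ Hx Hxi H0 h2.
  have h4 : lt [::] x.
    apply: (wd _ _ _ _ _ _ xxi _ h3); try apply: pb_mul => //.
    rewrite cats0; exact: be_refl.
  exact: (irr _ Hx (tr _ _ _ Hx H0 Hx h h4)).
- have h1 := cj _ _ H0 Hx h.
  have h2 : lt [::] (inv_word x) by apply: (wd _ _ _ _ _ _ conj0 conjx h1); apply: mem.
  have h3 := lm _ _ _ Hx H0 Hxi h2.
  have h4 : lt x [::].
    apply: (wd _ _ _ _ _ _ _ xxi h3); try apply: pb_mul => //.
    rewrite cats0; exact: be_refl.
  exact: (irr _ H0 (tr _ _ _ H0 Hx H0 h h4)).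
Qed.
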